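(* Let $n \geq 2$ and $2 \leq k \leq n$. Then the lower convex envelope of $Q_k$ on the nonnegative orthant $\mathbb{R}_+^n$ is identically $0$, and $Q_k$ has no lower convex envelope on $\mathbb{R}^n$, i.e. there is no convex function $f : \mathbb{R}^n \to \mathbb{R}$ with $f \leq Q_k$ on $\mathbb{R}^n$.
   Context: For $x \in \mathbb{R}^n$ and an integer $1 \leq k \leq n$, $Q_k(x)$ denotes the $k$-th largest entry of $x$ (entries counted with multiplicity). The lower convex envelope of a function $g$ on a convex set $D$ is the pointwise supremum of all convex functions $h : D \to \mathbb{R}$ satisfying $h \leq g$ on $D$ (i.e. the largest convex function below $g$ on $D$). *)

(* Defs.v *)
From HB Require Import structures.
From mathcomp Require Import all_boot all_order all_algebra.
From mathcomp Require Import reals.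
Set Implicit Arguments. Unset Strict Implicit. Unset Printing Implicit Defensive.
Import Order.TTheory GRing.Theory Num.Theory.
Local Open Scope ring_scope.

(* Q_k(x): the k-th largest entry of x (k counted from 1, with multiplicity):
   sort the entries in nonincreasing order and take the entry at index k-1. *)
Definition Qk (R : realType) (n k : nat) (x : 'rV[R]_n) : R :=
  nth 0 (sort (fun a b : R => b <= a) [seq x ord0 i | i <- enum 'I_n]) k.-1.

Definition orthant (R : realType) (n : nat) (x : 'rV[R]_n) : Prop :=
  forall i, 0 <= x ord0 i.

Definition convex_on (R : realType) (n : nat) (D : 'rV[R]_n -> Prop)
  (h : 'rV[R]_n -> R) : Prop :=
  forall x y, D x -> D y -> forall t : R, 0 <= t -> t <= 1 ->
    h (t *: x + (1 - t) *: y) <= t * h x + (1 - t) * h y.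

Definition convex_minorant (R : realType) (n : nat) (D : 'rV[R]_n -> Prop)
  (g h : 'rV[R]_n -> R) : Prop :=
  convex_on D h /\ forall x, D x -> h x <= g x.

Definition lce_value (R : realType) (n : nat) (D : 'rV[R]_n -> Prop)
  (g : 'rV[R]_n -> R) (x : 'rV[R]_n) (v : R) : Prop :=
  (forall h, convex_minorant D g h -> h x <= v) /\
  (forall u, (forall h, convex_minorant D g h -> h x <= u) -> v <= u).

(* Main.v *)
Require Import Defs.
From HB Require Import structures.
From mathcomp Require Import all_boot all_order all_algebra.
From mathcomp Require Import reals.
From mathcomp Require Import lra zify.
Import Order.TTheory GRing.Theory Num.Theory.
Local Open Scope ring_scope.

Lemma Qk_le (R : realType) n k (x : 'rV[R]_n) (M : R) : (2 <= k)%N -> (k <= n)%N ->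
  (count (fun a : R => (-M < a)%R) [seq x ord0 i | i <- enum 'I_n] <= 1)%N -> Qk k x <= -M.
Proof.
rewrite /Qk => hk hkn hc.
set s0 := [seq x ord0 i | i <- enum 'I_n] in hc *.
have hs : sorted (fun a b : R => b <= a) (sort (fun a b : R => b <= a) s0).
  by apply: sort_sorted => a b; exact: le_total.
have hcs : count (fun a : R => (-M < a)%R) (sort (fun a b : R => b <= a) s0) = count (fun a : R => (-M < a)%R) s0.
  by apply/permP; rewrite perm_sort.
have hsz : size (sort (fun a b : R => b <= a) s0) = n by rewrite size_sort size_map size_enum_ord.
move: (sort _ s0) hs hcs hsz => s hs hcs hsz.
rewrite leNgt; apply/negP => hlt.
case: s hs hcs hsz hlt => [|a [|b t]] /=; [by move=> _ _ hz; lia | by move=> _ _ hz; lia |].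
move=> /andP [hba hp] hcs hsz.
case E: k hk => [|[|k']] //= _ hlt.
have hbt : b >= nth 0 (b :: t) k'.
  case: k' E hlt => [|k''] E hlt /=; first by [].
  have := order_path_min (@le_trans _ R^d) hp.
  move/allP; apply; apply: mem_nth.
  move: hsz hkn; rewrite E /= => hz hk2. by rewrite -hz !ltnS in hk2.
have h1 : -M < b by apply: lt_le_trans hlt hbt.
have h2 : -M < a by apply: lt_le_trans h1 hba.
move: hc; rewrite -hcs /= h1 h2 /=; lia.
Qed.

Definition pt {R : realType} {n} (i : 'I_n) (c M : R) : 'rV[R]_n :=
  \row_j ((if j == i then c else 0) - M).

Lemma ptE (R : realType) n (i : 'I_n) (c M : R) :
  pt i c M = \row_j (if j == i then c else 0) - const_mx M.
Proof. by apply/rowP => j; rewrite !mxE. Qed.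

Lemma pt_count (R : realType) n (i : 'I_n) (c M : R) : 0 <= c ->
  (count (fun a : R => (-M < a)%R)
     [seq pt i c M ord0 j | j <- enum 'I_n] <= 1)%N.
Proof.
move=> hc; rewrite count_map.
apply: (@leq_trans (count (pred1 i) (enum 'I_n))).
  apply: sub_count => j /=; rewrite !mxE; case: eqP => // _; lra.
by rewrite (count_uniq_mem _ (enum_uniq _)) mem_enum.
Qed.

Lemma key (R : realType) n (hn : (0 < n)%N) (D : 'rV[R]_n -> Prop) (h : 'rV[R]_n -> R) (M : R) :
  convex_on D h ->
  (forall y, orthant y -> D (y - const_mx M)) ->
  (forall (c : R) (i : 'I_n), 0 <= c -> h (pt i c M) <= -M) ->
  forall y, orthant y -> h (y - const_mx M) <= -M.
Proof.
move=> hcv hD hpt.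
suff H : forall m y, orthant y -> (forall j : 'I_n, (m <= j)%N -> y ord0 j = 0) ->
    h (y - const_mx M) <= -M.
  by move=> y hy; apply: (H n) => // j; rewrite leqNgt ltn_ord.
elim=> [|m IH] y hy hsupp.
  have -> : y - const_mx M = pt (Ordinal hn) 0 M.
    by apply/rowP => j; rewrite !mxE hsupp //; case: eqP.
  by apply: hpt.
case: (ltnP m n) => hmn; last first.
  apply: IH => // j hj; apply: hsupp; have := ltn_ord j; lia.
pose i := Ordinal hmn.
pose y' : 'rV[R]_n := \row_j (if j == i then 0 else y ord0 j).
have eq : y - const_mx M = (1/2 : R) *: ((2 : R) *: y' - const_mx M)
   + (1 - 1/2) *: pt i (2 * y ord0 i) M.
  apply/rowP => j; rewrite !mxE; case: eqP => [->|_]; lra.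
have hy' : orthant ((2 : R) *: y').
  move=> j; rewrite !mxE; case: eqP => _; [lra|]; have := hy j; lra.
have hyi := hy i.
have hp : orthant (\row_j (if j == i then 2 * y ord0 i else 0) : 'rV[R]_n).
  move=> j; rewrite !mxE; case: eqP => _; lra.
have hDp : D (pt i (2 * y ord0 i) M) by rewrite ptE; apply: hD.
have hle := hcv _ _ (hD _ hy') hDp (1/2 : R) ltac:(lra) ltac:(lra).
rewrite eq; apply: le_trans hle _.
have h1 : h (2 *: y' - const_mx M) <= -M.
  apply: IH => // j hj; rewrite !mxE; case: eqP => [_|/eqP hne]; first lra.
  rewrite hsupp ?mulr0 //.
  have : (nat_of_ord j != m) by apply: contra hne => /eqP e; apply/eqP/val_inj.
  lia.
have h2 := hpt (2 * y ord0 i) i ltac:(lra).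
lra.
Qed.

Lemma Qk_ge0 (R : realType) n k (x : 'rV[R]_n) : orthant x -> 0 <= Qk k x.
Proof.
move=> hx; rewrite /Qk.
set s := sort _ _.
have hs : forall a, a \in s -> 0 <= a.
  move=> a; rewrite mem_sort => /mapP [j _ ->]; exact: hx.
case: (ltnP k.-1 (size s)) => hk; first by apply: hs; apply: mem_nth.
by rewrite nth_default.
Qed.

Theorem theorem2 (R : realType) (n k : nat) (hn : (2 <= n)%N)
  (hk2 : (2 <= k)%N) (hkn : (k <= n)%N) :
  (forall x : 'rV[R]_n, orthant x -> lce_value (@orthant R n) (Qk k) x 0) /\
  ~ (exists f : 'rV[R]_n -> R,
       convex_on (fun _ => True) f /\ forall x, f x <= Qk k x).
Proof.
have hn0 : (0 < n)%N by lia.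
have c0 : const_mx 0 = 0 :> 'rV[R]_n by apply/rowP => j; rewrite !mxE.
split.
- move=> x hx; split.
  + move=> h [hcv hle].
    have := @key R n hn0 _ h 0 hcv.
    rewrite c0 !oppr0 => H.
    suff : h (x + 0) <= 0 by rewrite addr0.
    apply: (H _ _ x hx).
    * by move=> y hy; rewrite addr0.
    * move=> c i hc; apply: le_trans (hle _ _) _.
        by move=> j; rewrite !mxE subr0; case: eqP.
      rewrite -oppr0; apply: Qk_le => //.
      by have := @pt_count R n i c 0 hc; rewrite oppr0.
  + move=> u Hu; apply: (Hu (fun _ => 0)); split.
      by move=> ? ? _ _ t _ _; rewrite !mulr0 addr0.
    by move=> y hy; apply: Qk_ge0.
- case=> f [hcv hle].
  pose M := `|f 0| + 1.
  have := @key R n hn0 _ f M hcv (fun _ _ => I) _ (const_mx M).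
  rewrite subrr => H.
  have {}H : f 0 <= - M.
    apply: H; last by move=> j; rewrite mxE /M; have := normr_ge0 (f 0); lra.
    move=> c i hc; apply: le_trans (hle _) _; apply: Qk_le => //.
    exact: pt_count.
  have := ler_norm (- f 0); rewrite normrN /M in H *; lra.
Qed.
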